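(* Let $G$ be a graph on $V$ and let $W_1,W_2\subseteq V$ be disjoint, with $W_1$ reducible in $G$. Then $W_2$ is reducible in $\Gamma_{W_1}(G)$ if and only if $W_1\cup W_2$ is reducible in $G$, and in this case $\Gamma_{W_1\cup W_2}(G)=\Gamma_{W_2}(\Gamma_{W_1}(G))$.
   Context: A graph means a finite simple graph in which loops are allowed, with adjacency matrix $A$ over $\mathbf F_2$ ($A_{vv}=1$ iff $v$ has a loop). Let $\mathcal V$ be the $\mathbf F_2$-vector space with basis $V$ and $\mathcal E(x,y)=x^TAy$. For $W\subseteq V$, $\langle W\rangle$ is the span of $W$ and $\langle W\rangle^{\perp\mathcal E}=\{x\in\mathcal V:\mathcal E(x,w)=0\ \forall w\in\langle W\rangle\}$. $W$ is reducible in $G$ if $\langle W\rangle+\langle W\rangle^{\perp\mathcal E}=\mathcal V$. For reducible $W$, define $\mathcal E^W(x_1,x_2)=\mathcal E(x_1',x_2')$ where $x_i'\in\langle W\rangle^{\perp\mathcal E}$ are any vectors with $x_i-x_i'\in\langle W\rangle$ (well defined); the graph reduction $\Gamma_W(G)$ is the graph on vertex set $V\setminus W$ in which $v,w$ (possibly equal) are joined iff $\mathcal E^W(v,w)=1$. *)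

(* Defs.v *)
From HB Require Import structures.
From mathcomp Require Import all_boot all_order all_algebra.
Set Implicit Arguments. Unset Strict Implicit. Unset Printing Implicit Defensive.
Import GRing.Theory.
Local Open Scope ring_scope.

(* A graph (loops allowed) with finite vertex set [verts] inside an ambient
   finite type [T]; adjacency [adj] is only meaningful on [verts]. *)
Record graph (T : finType) := Graph { verts : {set T}; adj : rel T }.

Definition graph_sym (T : finType) (G : graph T) : Prop :=
  forall u v, u \in verts G -> v \in verts G -> adj G u v = adj G v u.

(* Vectors of F_2^T; the space 𝒱 consists of those supported on verts G. *)
Definition vec (T : finType) := {ffun T -> 'F_2}.

Definition inV (T : finType) (G : graph T) (x : vec T) : bool :=
  [forall v, (v \notin verts G) ==> (x v == 0)].

Definition delta (T : finType) (v : T) : vec T := [ffun u => ((u == v) : nat)%:R].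

Definition E (T : finType) (G : graph T) (x y : vec T) : 'F_2 :=
  \sum_(u in verts G) \sum_(v in verts G) x u * (adj G u v : nat)%:R * y v.

Definition inspan (T : finType) (G : graph T) (W : {set T}) (x : vec T) : bool :=
  inV G x && [forall v, (v \notin W) ==> (x v == 0)].

Definition inperp (T : finType) (G : graph T) (W : {set T}) (x : vec T) : bool :=
  inV G x && [forall w, inspan G W w ==> (E G x w == 0)].

Definition reducible (T : finType) (G : graph T) (W : {set T}) : Prop :=
  forall x, inV G x -> exists a b, [&& inspan G W a & inperp G W b] /\ x = a + b.

(* some x' ∈ <W>^{⊥E} with x - x' ∈ <W> (exists when W is reducible) *)
Definition proj (T : finType) (G : graph T) (W : {set T}) (x : vec T) : vec T :=
  odflt 0 [pick x' | inperp G W x' && inspan G W (x - x')].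

Definition EW (T : finType) (G : graph T) (W : {set T}) (x1 x2 : vec T) : 'F_2 :=
  E G (proj G W x1) (proj G W x2).

Definition reduction (T : finType) (G : graph T) (W : {set T}) : graph T :=
  Graph (verts G :\: W) (fun v w => EW G W (delta v) (delta w) == 1).

Definition graph_eq (T : finType) (G H : graph T) : Prop :=
  verts G = verts H /\
  forall u v, u \in verts G -> v \in verts G -> adj G u v = adj H u v.

(* Main.v *)
Require Import Defs.
From mathcomp Require Import all_boot all_order all_algebra ring.
Set Implicit Arguments. Unset Strict Implicit. Unset Printing Implicit Defensive.
Import GRing.Theory.
Local Open Scope ring_scope.
Ltac vring := apply/ffunP => ?; rewrite !ffunE; ring.

Definition sc (T : finType) (c : 'F_2) (x : vec T) : vec T := [ffun u => c * x u].
Definition restr (T : finType) (A : {set T}) (x : vec T) : vec T :=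
  [ffun u => if u \in A then x u else 0].
Definition isproj (T : finType) (G : graph T) (W : {set T}) (x x' : vec T) :=
  inperp G W x' && inspan G W (x - x').

Lemma F2_eq1 (e : 'F_2) : (((e == 1)%B : nat)%:R : 'F_2) = e.
Proof. by case: e => -[|[|n]] H; apply: val_inj. Qed.

Lemma supP (T : finType) (W : {set T}) (x : vec T) :
  reflect (forall v, v \notin W -> x v = 0) [forall v, (v \notin W) ==> (x v == 0)].
Proof.
apply: (iffP forallP) => H v.
  by move=> hv; apply/eqP; exact: (implyP (H v)).
by apply/implyP => hv; apply/eqP; exact: H.
Qed.

Lemma inVP (T : finType) (G : graph T) (x : vec T) :
  reflect (forall v, v \notin verts G -> x v = 0) (inV G x).
Proof. exact: supP. Qed.

Lemma inspanP (T : finType) (G : graph T) (W : {set T}) (x : vec T) :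
  reflect (inV G x /\ forall v, v \notin W -> x v = 0) (inspan G W x).
Proof. by apply: (iffP andP) => -[h1 /supP h2]; split => //; apply/supP. Qed.

Lemma perpE (T : finType) (G : graph T) (W : {set T}) (b w : vec T) :
  inperp G W b -> inspan G W w -> E G b w = 0.
Proof. by case/andP=> _ /forallP H hw; apply/eqP; exact: (implyP (H w)). Qed.

Lemma perpV (T : finType) (G : graph T) (W : {set T}) (b : vec T) : inperp G W b -> inV G b.
Proof. by case/andP. Qed.

Lemma perpI (T : finType) (G : graph T) (W : {set T}) (b : vec T) :
  inV G b -> (forall w, inspan G W w -> E G b w = 0) -> inperp G W b.
Proof. by move=> h H; apply/andP; split=> //; apply/forallP => w; apply/implyP => hw; apply/eqP; exact: H. Qed.

Lemma spanV (T : finType) (G : graph T) (W : {set T}) (b : vec T) : inspan G W b -> inV G b.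
Proof. by case/andP. Qed.

Lemma sup0 (T : finType) (W : {set T}) : [forall v, (v \notin W) ==> ((0 : vec T) v == 0)].
Proof. by apply/supP => v _; rewrite ffunE. Qed.

Lemma supD (T : finType) (W : {set T}) (x y : vec T) :
  [forall v, (v \notin W) ==> (x v == 0)] -> [forall v, (v \notin W) ==> (y v == 0)] ->
  [forall v, (v \notin W) ==> ((x + y) v == 0)].
Proof. by move=> /supP h1 /supP h2; apply/supP => v hv; rewrite ffunE h1 ?h2 ?addr0. Qed.

Lemma supN (T : finType) (W : {set T}) (x : vec T) :
  [forall v, (v \notin W) ==> (x v == 0)] -> [forall v, (v \notin W) ==> ((- x) v == 0)].
Proof. by move=> /supP h1; apply/supP => v hv; rewrite ffunE h1 ?oppr0. Qed.

Lemma supZ (T : finType) (W : {set T}) c (x : vec T) :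
  [forall v, (v \notin W) ==> (x v == 0)] -> [forall v, (v \notin W) ==> (sc c x v == 0)].
Proof. by move=> /supP h1; apply/supP => v hv; rewrite ffunE h1 ?mulr0. Qed.

Lemma inV0 (T : finType) (G : graph T) : inV G 0. Proof. exact: sup0. Qed.
Lemma inVD (T : finType) (G : graph T) x y : inV G x -> inV G y -> inV G (x + y).
Proof. exact: supD. Qed.
Lemma inVN (T : finType) (G : graph T) x : inV G x -> inV G (- x).
Proof. exact: supN. Qed.
Lemma inVB (T : finType) (G : graph T) x y : inV G x -> inV G y -> inV G (x - y).
Proof. by move=> h1 h2; apply: inVD => //; apply: inVN. Qed.
Lemma inVZ (T : finType) (G : graph T) c x : inV G x -> inV G (sc c x).
Proof. exact: supZ. Qed.

Lemma span0 (T : finType) (G : graph T) (W : {set T}) : inspan G W 0.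
Proof. by rewrite /inspan inV0 sup0. Qed.
Lemma spanD (T : finType) (G : graph T) (W : {set T}) x y :
  inspan G W x -> inspan G W y -> inspan G W (x + y).
Proof. by case/andP=> h1 h2 /andP[h3 h4]; rewrite /inspan inVD // supD. Qed.
Lemma spanN (T : finType) (G : graph T) (W : {set T}) x : inspan G W x -> inspan G W (- x).
Proof. by case/andP=> h1 h2; rewrite /inspan inVN // supN. Qed.
Lemma spanB (T : finType) (G : graph T) (W : {set T}) x y :
  inspan G W x -> inspan G W y -> inspan G W (x - y).
Proof. by move=> h1 h2; apply: spanD => //; apply: spanN. Qed.
Lemma spanZ (T : finType) (G : graph T) (W : {set T}) c x : inspan G W x -> inspan G W (sc c x).
Proof. by case/andP=> h1 h2; rewrite /inspan inVZ // supZ. Qed.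
Lemma span_mono (T : finType) (G : graph T) (W W' : {set T}) x :
  W \subset W' -> inspan G W x -> inspan G W' x.
Proof.
move=> sW /inspanP[h1 h2]; apply/inspanP; split=> // v hv; apply: h2.
by apply: contra hv; apply: (subsetP sW).
Qed.

Lemma E_Dl (T : finType) (G : graph T) x y z : E G (x + y) z = E G x z + E G y z.
Proof.
rewrite /E -big_split; apply: eq_bigr => u _; rewrite -big_split; apply: eq_bigr => v _.
by rewrite ffunE mulrDl mulrDl.
Qed.
Lemma E_Dr (T : finType) (G : graph T) x y z : E G z (x + y) = E G z x + E G z y.
Proof.
rewrite /E -big_split; apply: eq_bigr => u _; rewrite -big_split; apply: eq_bigr => v _.
by rewrite ffunE mulrDr.
Qed.
Lemma E_Nl (T : finType) (G : graph T) x z : E G (- x) z = - E G x z.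
Proof.
rewrite /E -sumrN; apply: eq_bigr => u _; rewrite -sumrN; apply: eq_bigr => v _.
by rewrite ffunE !mulNr.
Qed.
Lemma E_Nr (T : finType) (G : graph T) x z : E G z (- x) = - E G z x.
Proof.
rewrite /E -sumrN; apply: eq_bigr => u _; rewrite -sumrN; apply: eq_bigr => v _.
by rewrite ffunE mulrN.
Qed.
Lemma E_Zl (T : finType) (G : graph T) c x z : E G (sc c x) z = c * E G x z.
Proof.
rewrite /E mulr_sumr; apply: eq_bigr => u _; rewrite mulr_sumr; apply: eq_bigr => v _.
by rewrite ffunE !mulrA.
Qed.
Lemma E_Zr (T : finType) (G : graph T) c x z : E G z (sc c x) = c * E G z x.
Proof.
rewrite /E mulr_sumr; apply: eq_bigr => u _; rewrite mulr_sumr; apply: eq_bigr => v _.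
by rewrite ffunE mulrCA (mulrCA c) !mulrA.
Qed.
Lemma E_0l (T : finType) (G : graph T) z : E G 0 z = 0.
Proof. by rewrite /E big1 // => u _; rewrite big1 // => v _; rewrite ffunE !mul0r. Qed.
Lemma E_0r (T : finType) (G : graph T) z : E G z 0 = 0.
Proof. by rewrite /E big1 // => u _; rewrite big1 // => v _; rewrite ffunE !mulr0. Qed.
Lemma E_Bl (T : finType) (G : graph T) x y z : E G (x - y) z = E G x z - E G y z.
Proof. by rewrite E_Dl E_Nl. Qed.
Lemma E_Br (T : finType) (G : graph T) x y z : E G z (x - y) = E G z x - E G z y.
Proof. by rewrite E_Dr E_Nr. Qed.

Lemma E_suml (T : finType) (G : graph T) (I : Type) (r : seq I) (P : pred I) F z :
  E G (\sum_(i <- r | P i) F i) z = \sum_(i <- r | P i) E G (F i) z.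
Proof. by apply: (big_morph (fun x => E G x z) (fun a b => @E_Dl T G a b z) (E_0l G z)). Qed.

Lemma E_sym (T : finType) (G : graph T) x y : graph_sym G -> E G x y = E G y x.
Proof.
move=> sym; rewrite /E exchange_big; apply: eq_bigr => i hi; apply: eq_bigr => j hj.
by rewrite (sym _ _ hj hi) mulrC [x j * _]mulrC mulrA.
Qed.

Lemma perpD (T : finType) (G : graph T) (W : {set T}) x y :
  inperp G W x -> inperp G W y -> inperp G W (x + y).
Proof.
move=> h1 h2; apply: perpI; first by apply: inVD; apply: perpV; eauto.
by move=> w hw; rewrite E_Dl (perpE h1 hw) (perpE h2 hw) addr0.
Qed.
Lemma perpZ (T : finType) (G : graph T) (W : {set T}) c x :
  inperp G W x -> inperp G W (sc c x).
Proof.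
move=> h1; apply: perpI; first by apply: inVZ; apply: perpV h1.
by move=> w hw; rewrite E_Zl (perpE h1 hw) mulr0.
Qed.
Lemma perp0 (T : finType) (G : graph T) (W : {set T}) : inperp G W 0.
Proof. by apply: perpI; [exact: inV0| move=> w _; rewrite E_0l]. Qed.
Lemma perp_mono (T : finType) (G : graph T) (W W' : {set T}) x :
  W \subset W' -> inperp G W' x -> inperp G W x.
Proof.
move=> sW h; apply: perpI; first exact: perpV h.
by move=> w hw; apply: perpE h _; apply: span_mono hw.
Qed.

Lemma projD (T : finType) (G : graph T) (W : {set T}) x x' y y' :
  isproj G W x x' -> isproj G W y y' -> isproj G W (x + y) (x' + y').
Proof.
case/andP=> h1 h2 /andP[h3 h4]; rewrite /isproj perpD //.
have -> : x + y - (x' + y') = (x - x') + (y - y').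
  by vring.
exact: spanD.
Qed.
Lemma projZ (T : finType) (G : graph T) (W : {set T}) c x x' :
  isproj G W x x' -> isproj G W (sc c x) (sc c x').
Proof.
case/andP=> h1 h2; rewrite /isproj perpZ //.
have -> : sc c x - sc c x' = sc c (x - x').
  by apply/ffunP => u; rewrite !ffunE mulrBr.
exact: spanZ.
Qed.
Lemma proj0 (T : finType) (G : graph T) (W : {set T}) : isproj G W 0 0.
Proof. by rewrite /isproj perp0 subr0 span0. Qed.

Lemma proj_shift (T : finType) (G : graph T) (W : {set T}) x y x' :
  isproj G W x x' -> inspan G W (x - y) -> isproj G W y x'.
Proof.
case/andP=> h1 h2 h3; rewrite /isproj h1 /=.
have -> : y - x' = (x - x') - (x - y).
  by vring.
exact: spanB.
Qed.

Lemma proj_spec (T : finType) (G : graph T) (W : {set T}) x :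
  reducible G W -> inV G x -> isproj G W x (proj G W x).
Proof.
move=> red hx; rewrite /proj; case: pickP => [x' hx'|H] //=.
case: (red x hx) => a [b [/andP[ha hb] e]].
have := H b; rewrite hb /=.
have -> : x - b = a by rewrite e addrK.
by rewrite ha.
Qed.

Lemma proj_wd (T : finType) (G : graph T) (W : {set T}) x x1 x2 y y1 y2 :
  graph_sym G -> isproj G W x x1 -> isproj G W x x2 ->
  isproj G W y y1 -> isproj G W y y2 -> E G x1 y1 = E G x2 y2.
Proof.
move=> sym /andP[p1 s1] /andP[p2 s2] /andP[q1 t1] /andP[q2 t2].
transitivity (E G x2 y1).
  apply/eqP; rewrite -subr_eq0 -E_Bl E_sym //; apply/eqP; apply: perpE q1 _.
  have -> : x1 - x2 = (x - x2) - (x - x1) by vring.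
  exact: spanB.
apply/eqP; rewrite -subr_eq0 -E_Br; apply/eqP; apply: perpE p2 _.
have -> : y1 - y2 = (y - y2) - (y - y1) by vring.
exact: spanB.
Qed.

Lemma perp_proj (T : finType) (G : graph T) (W : {set T}) b w w' :
  inperp G W b -> isproj G W w w' -> E G b w' = E G b w.
Proof.
move=> hb /andP[_ hs]; apply/eqP; rewrite -subr_eq0 -E_Br; apply/eqP.
have -> : w' - w = - (w - w') by rewrite opprB.
by rewrite E_Nr (perpE hb hs) oppr0.
Qed.

Lemma decomp (T : finType) (H : graph T) x :
  inV H x -> x = \sum_(u in verts H) sc (x u) (delta u).
Proof.
move/inVP=> Hx; apply/ffunP => w; rewrite sum_ffunE.
have F : forall u, sc (x u) (delta u) w = if u == w then x w else 0.
  by move=> u; rewrite !ffunE eq_sym; case: eqP => [->|_]; rewrite ?mulr1 ?mulr0.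
under eq_bigr do rewrite F.
case hw: (w \in verts H).
  rewrite (bigD1 w) //= eqxx big1 ?addr0 // => u /andP[_ /negbTE ->] //.
rewrite Hx ?hw // big1 // => u hu; case: eqP => // e; move: hu; rewrite e hw.
Qed.

Lemma deltaV (T : finType) (G : graph T) u : u \in verts G -> inV G (delta u).
Proof.
move=> hu; apply/inVP => v hv; rewrite ffunE; case: eqP => // e.
by move: hv; rewrite e hu.
Qed.

Lemma redV (T : finType) (G : graph T) (W1 : {set T}) x :
  inV (reduction G W1) x -> inV G x.
Proof.
move/inVP=> h; apply/inVP => v hv; apply: h; by rewrite /= inE negb_and hv orbT.
Qed.

Lemma redV0 (T : finType) (G : graph T) (W1 : {set T}) x v :
  inV (reduction G W1) x -> v \in W1 -> x v = 0.
Proof. by move/inVP=> h hv; apply: h; rewrite /= inE hv. Qed.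

Lemma E_red (T : finType) (G : graph T) (W1 : {set T}) x y :
  graph_sym G -> reducible G W1 -> inV (reduction G W1) x -> inV (reduction G W1) y ->
  E (reduction G W1) x y = E G (proj G W1 x) (proj G W1 y).
Proof.
move=> sym red hx hy.
have subV : forall u, u \in verts (reduction G W1) -> u \in verts G.
  by move=> u; rewrite /= inE => /andP[].
pose P u := proj G W1 (delta u).
have pP : forall u, u \in verts (reduction G W1) -> isproj G W1 (delta u) (P u).
  by move=> u hu; apply: proj_spec red (deltaV (subV u hu)).
have pX : isproj G W1 x (\sum_(u in verts (reduction G W1)) sc (x u) (P u)).
  rewrite {1}(decomp hx); apply: (big_ind2 (isproj G W1)); first exact: proj0.
    by move=> *; exact: projD.
  by move=> u hu; apply: projZ; apply: pP.
have pY : isproj G W1 y (\sum_(u in verts (reduction G W1)) sc (y u) (P u)).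
  rewrite {1}(decomp hy); apply: (big_ind2 (isproj G W1)); first exact: proj0.
    by move=> *; exact: projD.
  by move=> u hu; apply: projZ; apply: pP.
rewrite (proj_wd sym (proj_spec red (redV hx)) pX (proj_spec red (redV hy)) pY).
transitivity (\sum_(u in verts (reduction G W1)) \sum_(v in verts (reduction G W1))
                x u * E G (P u) (P v) * y v).
  by rewrite {1}/E; apply: eq_bigr => u _; apply: eq_bigr => v _ /=; rewrite F2_eq1.
rewrite E_suml; apply: eq_bigr => u _; rewrite E_Zl E_sym // E_suml mulr_sumr.
apply: eq_bigr => v _; rewrite E_Zl E_sym //; ring.
Qed.

Lemma restrV (T : finType) (G : graph T) (A : {set T}) x : inV G x -> inV G (restr A x).
Proof. by move/inVP=> h; apply/inVP => v hv; rewrite ffunE h ?if_same. Qed.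

Lemma restr_span (T : finType) (G : graph T) (A : {set T}) x :
  inV G x -> inspan G A (restr A x).
Proof.
move=> h; apply/inspanP; split; first exact: restrV.
by move=> v hv; rewrite ffunE (negbTE hv).
Qed.

Lemma split1 (T : finType) (G : graph T) (W1 : {set T}) x :
  inV G x -> x = restr W1 x + restr (verts G :\: W1) x.
Proof.
move/inVP=> h; apply/ffunP => u; rewrite !ffunE inE.
case: (boolP (u \in W1)) => hu /=; first by rewrite addr0.
by rewrite add0r; case: (boolP (u \in verts G)) => // hv; rewrite h.
Qed.

Lemma split2 (T : finType) (G : graph T) (W1 W2 : {set T}) a :
  [disjoint W1 & W2] -> inspan G (W1 :|: W2) a -> a = restr W1 a + restr W2 a.
Proof.
move=> dis /inspanP[_ h]; apply/ffunP => u; rewrite !ffunE.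
case: (boolP (u \in W1)) => hu1.
  by rewrite (disjointFr dis hu1) addr0.
rewrite add0r; case: (boolP (u \in W2)) => // hu2.
by rewrite h // inE negb_or hu1.
Qed.

Lemma span_red (T : finType) (G : graph T) (W1 W2 : {set T}) w :
  [disjoint W1 & W2] -> inspan G W2 w -> inspan (reduction G W1) W2 w.
Proof.
move=> dis /inspanP[/inVP h1 h2]; apply/inspanP; split => //.
apply/inVP => v; rewrite /= inE negb_and negbK => /orP[hv|hv]; last exact: h1.
by apply: h2; rewrite (disjointFr dis hv).
Qed.

Lemma span_red' (T : finType) (G : graph T) (W1 W2 : {set T}) w :
  inspan (reduction G W1) W2 w -> inspan G W2 w.
Proof. by move/inspanP=> [h1 h2]; apply/inspanP; split => //; apply: redV h1. Qed.

Lemma perpU (T : finType) (G : graph T) (W1 W2 : {set T}) y :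
  [disjoint W1 & W2] -> inperp G W1 y -> (forall w, inspan G W2 w -> E G y w = 0) ->
  inperp G (W1 :|: W2) y.
Proof.
move=> dis hy H; apply: perpI; first exact: perpV hy.
move=> w hw; have hV := spanV hw.
rewrite (split2 dis hw) E_Dr (perpE hy (restr_span _ hV)) add0r.
exact: H (restr_span _ hV).
Qed.

Lemma K1 (T : finType) (G : graph T) (W1 W2 : {set T}) b :
  graph_sym G -> reducible G W1 -> [disjoint W1 & W2] ->
  inperp (reduction G W1) W2 b -> inperp G (W1 :|: W2) (proj G W1 b).
Proof.
move=> sym red dis hb.
have hbV := perpV hb.
have pb := proj_spec red (redV hbV).
have /andP[pb1 _] := pb.
apply: perpU => // w hw.
have hwV : inV G w := spanV hw.
have hwr : inspan (reduction G W1) W2 w by apply: span_red.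
rewrite -(perp_proj pb1 (proj_spec red hwV)) -E_red //; last exact: spanV hwr.
exact: perpE hb hwr.
Qed.

Theorem mainTheorem6 (T : finType) (G : graph T) (W1 W2 : {set T}) :
  graph_sym G ->
  W1 \subset verts G -> W2 \subset verts G -> [disjoint W1 & W2] ->
  reducible G W1 ->
  (reducible (reduction G W1) W2 <-> reducible G (W1 :|: W2)) /\
  (reducible G (W1 :|: W2) ->
     graph_eq (reduction G (W1 :|: W2)) (reduction (reduction G W1) W2)).
Proof.
move=> sym sW1 sW2 dis red.
have W1W : W1 \subset W1 :|: W2 := subsetUl _ _.
have W2W : W2 \subset W1 :|: W2 := subsetUr _ _.
have part1 : reducible (reduction G W1) W2 <-> reducible G (W1 :|: W2).
  split.
  - move=> red2 x hx.
    pose x' := restr (verts G :\: W1) x.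
    have hx' : inV (reduction G W1) x'.
      by apply/inVP => v /= hv; rewrite /x' ffunE (negbTE hv).
    case: (red2 x' hx') => a [b [/andP[ha hb] e]].
    pose B := proj G W1 b.
    have /andP[_ sB] := proj_spec red (redV (perpV hb)).
    exists (x - B), B; split; last by rewrite subrK.
    apply/andP; split; last exact: K1.
    have -> : x - B = restr W1 x + a + (b - B).
      by rewrite {1}(split1 W1 hx) -/x' e !addrA.
    apply: spanD; first apply: spanD.
    + exact: span_mono W1W (restr_span _ hx).
    + exact: span_mono W2W (span_red' ha).
    + exact: span_mono W1W sB.
  - move=> redW x hx.
    have hxG := redV hx.
    case: (redW x hxG) => a [b [/andP[ha hb] e]].
    pose a' := restr W2 a.
    have ha' : inspan (reduction G W1) W2 a'.
      by apply: span_red dis _; exact: restr_span (spanV ha).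
    have hxa : inV (reduction G W1) (x - a') by apply: inVB hx (spanV ha').
    exists a', (x - a'); split; last by rewrite addrC subrK.
    apply/andP; split => //.
    apply: perpI => // w hw.
    have wV : inV G w := redV (spanV hw).
    have hbp : isproj G W1 (x - a') b.
      rewrite /isproj (perp_mono W1W hb) /=.
      have -> : x - a' - b = restr W1 a.
        by rewrite e {1}(split2 dis ha) /a' addrAC addrK addrK.
      exact: restr_span (spanV ha).
    rewrite E_red //; last exact: spanV hw.
    rewrite (proj_wd sym (proj_spec red (redV hxa)) hbp (proj_spec red wV) (proj_spec red wV)).
    rewrite (perp_proj (perp_mono W1W hb) (proj_spec red wV)).
    exact: perpE hb (span_mono W2W (span_red' hw)).
split => // redW; have red2 := proj2 part1 redW.
split; first by rewrite /= setDDl.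
have key : forall u, u \in verts G :\: W1 ->
    isproj G (W1 :|: W2) (delta u) (proj G W1 (proj (reduction G W1) W2 (delta u))).
  move=> u hu; set q := proj (reduction G W1) W2 (delta u).
  have /andP[pq1 pq2] := proj_spec red2 (@deltaV _ (reduction G W1) u hu).
  have /andP[_ s1] := proj_spec red (redV (perpV pq1)).
  rewrite /isproj K1 //=.
  have -> : delta u - proj G W1 q = (delta u - q) + (q - proj G W1 q) by vring.
  apply: spanD; [exact: span_mono W2W (span_red' pq2) | exact: span_mono W1W s1].
move=> u v hu hv /=.
have hu1 : u \in verts G :\: W1 by move: hu; rewrite /= -setDDl inE => /andP[].
have hv1 : v \in verts G :\: W1 by move: hv; rewrite /= -setDDl inE => /andP[].
have hu0 : u \in verts G by move: hu1; rewrite inE => /andP[].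
have hv0 : v \in verts G by move: hv1; rewrite inE => /andP[].
congr (_ == 1); rewrite /EW E_red //; last first.
- exact: perpV (proj1 (andP (proj_spec red2 (@deltaV _ (reduction G W1) v hv1)))).
- exact: perpV (proj1 (andP (proj_spec red2 (@deltaV _ (reduction G W1) u hu1)))).
exact: proj_wd sym (proj_spec redW (deltaV hu0)) (key u hu1)
                   (proj_spec redW (deltaV hv0)) (key v hv1).
Qed.
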